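(* Let $\iota$ be a continuous involution of $G$, $H$ a pro-$p$ open compact subgroup of $G$ and $\chi$ a character of $H$. Suppose there is $w\in G$ with $\iota(H)=H^w$ and $\chi^{-1}\circ\iota=\chi^w$. Then for every $g\in G$, the character $\chi^g$ is trivial on $H^g\cap G^\iota$ if and only if $w\,\iota(g)\,g^{-1}$ intertwines $\chi$.
   Context: $F$ is a non-archimedean locally compact field of odd residue characteristic $p$, $A$ a central simple $F$-algebra and $G=A^\times$. $G^\iota$ is the fixed-point subgroup of $\iota$. For $g\in G$: $H^g=g^{-1}Hg$ and $\chi^g(x)=\chi(gxg^{-1})$ for $x\in H^g$. An element $\gamma\in G$ intertwines $\chi$ if $\chi(h)=\chi^\gamma(h)$ for all $h\in H\cap H^\gamma$. *)

(* Defs.v *)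
From HB Require Import structures.
From mathcomp Require Import all_boot all_order all_algebra.
From mathcomp Require Import falgebra reals.
From mathcomp.real_closed Require Import complex.
From Stdlib Require List.

Set Implicit Arguments.
Unset Strict Implicit.
Unset Printing Implicit Defensive.

Import Order.TTheory GRing.Theory Num.Theory.
Local Open Scope ring_scope.

Definition dopen {R : realType} {T : Type} (d : T -> T -> R) (U : T -> Prop) :=
  forall x, U x -> exists2 e : R, 0 < e & forall y, d x y < e -> U y.

Definition dcompact {R : realType} {T : Type} (d : T -> T -> R) (K : T -> Prop) :=
  forall (I : Type) (U : I -> T -> Prop),
    (forall i, dopen d (U i)) -> (forall x, K x -> exists i, U i x) ->
    exists s : list I, forall x, K x -> exists i, List.In i s /\ U i x.

(* abs is a non-archimedean, non-trivial absolute value on F whose metric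
   topology is locally compact (some closed ball around 0 of positive radius is
   compact), and the residue characteristic is p (i.e. |p| < 1). *)
Definition nonarch_local_field {R : realType} (F : fieldType) (abs : F -> R)
    (p : nat) :=
  [/\ (forall x, abs x = 0 <-> x = 0) /\ (forall x, 0 <= abs x),
      (forall x y, abs (x * y) = abs x * abs y) /\
      (forall x y, abs (x + y) <= Num.max (abs x) (abs y)),
      (exists x, abs x != 0 /\ abs x != 1),
      (exists2 r : R, 0 < r &
        dcompact (fun x y => abs (x - y)) (fun x => abs x <= r))
    & abs (p%:R : F) < 1].

Definition central_simple (F : fieldType) (A : falgType F) :=
  (forall a : A, (forall b : A, a * b = b * a) -> exists c : F, a = c%:A) /\
  (forall I : {vspace A},
      (forall a x : A, x \in I -> (a * x \in I) /\ (x * a \in I)) ->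
      I = 0%VS \/ I = fullv).

(* The natural (product) metric on A, via coordinates in a fixed F-basis. *)
Definition alg_dist {R : realType} (F : fieldType) (abs : F -> R)
    (A : falgType F) (a b : A) : R :=
  \big[Num.max/0]_(i < \dim (fullv : {vspace A}))
     abs (coord (vbasis fullv) i (a - b)).

Section GroupNotions.
Variables (R : realType) (F : fieldType) (abs : F -> R) (A : falgType F).
Local Notation d := (alg_dist abs (A := A)).
Local Notation inG x := (x \is a GRing.unit).

Definition is_subgroup (H : A -> Prop) :=
  [/\ forall x, H x -> inG x, H 1,
      forall x y, H x -> H y -> H (x * y)
    & forall x, H x -> H x^-1].

Definition open_in_G (H : A -> Prop) :=
  (forall x, H x -> inG x) /\
  forall x, H x -> exists2 e : R, 0 < e &
    forall y, inG y -> d x y < e -> H y.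

Definition normal_in (N H : A -> Prop) :=
  forall h x, H h -> N x -> N (h * x * h^-1).

Definition has_index (H N : A -> Prop) (n : nat) :=
  exists s : seq A, [/\ size s = n, forall x, x \in s -> H x,
    forall h, H h -> exists2 x, x \in s & N (x^-1 * h)
  & forall i j, (i < n)%N -> (j < n)%N ->
      N ((nth 0 s i)^-1 * nth 0 s j) -> i = j].

Definition prop_compact_open (p : nat) (H : A -> Prop) :=
  [/\ is_subgroup H, open_in_G H, dcompact d H
    & forall N, is_subgroup N -> (forall x, N x -> H x) -> normal_in N H ->
        open_in_G N -> exists k, has_index H N (p ^ k)].

Definition cont_involution (iota : A -> A) :=
  [/\ forall x, inG x -> inG (iota x),
      forall x y, inG x -> inG y -> iota (x * y) = iota x * iota y,
      forall x, inG x -> iota (iota x) = x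
    & forall x, inG x -> forall e : R, 0 < e -> exists2 e' : R, 0 < e' &
        forall y, inG y -> d x y < e' -> d (iota x) (iota y) < e].

Definition character (H : A -> Prop) (chi : A -> complex R) :=
  [/\ forall x, H x -> chi x != 0,
      forall x y, H x -> H y -> chi (x * y) = chi x * chi y
    & forall x, H x -> forall e : R, 0 < e -> exists2 e' : R, 0 < e' &
        forall y, H y -> d x y < e' -> `|chi y - chi x| < (e%:C)%C].

End GroupNotions.

(* H^g = g^-1 H g *)
Definition conjset (F : fieldType) (A : falgType F) (H : A -> Prop) (g : A) :
  A -> Prop := fun x => H (g * x * g^-1).

Definition conjchar (F : fieldType) (A : falgType F) (C : Type) (chi : A -> C)
  (g : A) : A -> C := fun x => chi (g * x * g^-1).

Definition intertwines (F : fieldType) (A : falgType F) (C : Type)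
    (H : A -> Prop) (chi : A -> C) (gamma : A) :=
  forall h, H h -> conjset H gamma h -> chi h = conjchar chi gamma h.

(* Main.v *)
Require Import Defs.
From HB Require Import structures.
From mathcomp Require Import all_boot all_order all_algebra all_fingroup.
From mathcomp Require Import falgebra reals archimedean.
From mathcomp.real_closed Require Import complex.
From mathcomp Require Import ring lra.
From Stdlib Require Import ClassicalEpsilon Classical.
Set Implicit Arguments.
Unset Strict Implicit.
Unset Printing Implicit Defensive.
Import Order.TTheory GRing.Theory Num.Theory.
Local Open Scope ring_scope.
Section Cplx.
Local Open Scope complex_scope.
Variable R : realType.
Local Notation C := (complex R).

Definition nr (z : C) : R := complex.Re `|z|.

Lemma nrE (z : C) : `|z| = (nr z)%:C.
Proof. by rewrite /nr normc_def. Qed.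

Lemma nr_ge0 z : 0 <= nr z.
Proof. by rewrite -ler0c -nrE. Qed.

Lemma nrM x y : nr (x * y) = nr x * nr y.
Proof. by apply: complexI; rewrite rmorphM /= -!nrE normrM. Qed.

Lemma nrD x y : nr (x + y) <= nr x + nr y.
Proof. by rewrite -lecR rmorphD /= -!nrE ler_normD. Qed.

Lemma nrN x : nr (- x) = nr x.
Proof. by rewrite /nr normrN. Qed.

Lemma nr_eq0 x : nr x = 0 -> x = 0.
Proof. by move=> h; apply/eqP; rewrite -normr_eq0 nrE h. Qed.

Lemma nr_lt x e : (`|x| < e%:C) = (nr x < e).
Proof. by rewrite nrE ltcR. Qed.

Lemma nr_nat n : nr (n%:R) = n%:R.
Proof. by apply: complexI; rewrite -nrE normr_nat /=; rewrite rmorph_nat. Qed.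

Lemma pow_near1 (c : C) : (forall k, nr (c ^+ (2 ^ k) - 1) < 1/2) -> c = 1.
Proof.
move=> hk; set t := fun k => nr (c ^+ (2 ^ k) - 1).
have step k : 3/2 * t k <= t k.+1.
  rewrite /t expnS mulnC exprM expr2.
  have -> : c ^+ (2 ^ k) * c ^+ (2 ^ k) - 1 = (c ^+ (2 ^ k) - 1) * (c ^+ (2 ^ k) - 1 + 2%:R).
    by ring.
  rewrite nrM.
  have h2 : 3/2 <= nr (c ^+ (2 ^ k) - 1 + 2%:R).
    have := nrD (c ^+ (2 ^ k) - 1 + 2%:R) (- (c ^+ (2 ^ k) - 1)).
    rewrite addrC addKr nrN nr_nat; have := hk k; rewrite /t. lra.
  rewrite mulrC; apply: ler_wpM2l => //; exact: nr_ge0.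
have lin k : t 0%N + k%:R * t 0%N / 2 <= t k.
  elim: k => [|k ih]; first by rewrite mul0r mul0r addr0.
  have := step k; have := nr_ge0 (c ^+ (2 ^ 0) - 1); rewrite -/(t 0%N).
  rewrite -natr1 => h0 hs; have : 0 <= k%:R * t 0%N by rewrite mulr_ge0. lra.
have t0 : t 0%N = 0.
  apply/eqP; rewrite eq_le nr_ge0 andbT; rewrite leNgt; apply/negP => pos.
  have ip : 0 < (t 0%N)^-1 by rewrite invr_gt0.
  have := archi_boundP (ltW ip); set m := Num.bound _ => hm.
  have := lin m; have := hk m; rewrite -/(t m) => h1 h2.
  have : m%:R * t 0%N > 1 by rewrite -ltr_pdivrMr // mul1r.
  lra.
by apply/eqP; rewrite -subr_eq0; apply/eqP/nr_eq0; rewrite -t0 /t expn0 expr1.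
Qed.
End Cplx.

Section Orbit.
Local Open Scope group_scope.
Variables (n : nat) (sig : {perm 'I_n}) (P : nat -> Prop).
Hypothesis Pfree : forall m i, (sig ^+ m)%g i = i -> (sig ^+ m = 1)%g.

Lemma free_order_dvd : (#[sig]%g %| n)%N.
Proof.
have hc : forall i : 'I_n, #|orbit 'P <[sig]> i| = #[sig]%g.
  move=> i; have := card_orbit_stab 'P <[sig]>%g i.
  have -> : #|'C_<[sig]>[i | 'P]| = 1%N.
    rewrite -(cards1 (1 : {perm 'I_n})); apply: eq_card => t.
    rewrite !inE; apply/idP/idP.
      move=> /andP [/cycleP [m ->]] h; apply/eqP; apply: (@Pfree m i).
      by move: h => /andP [_ /subsetP /(_ i (set11 i))]; rewrite inE /= apermE => /eqP.
    move=> /eqP ->; rewrite group1 /=; apply/subsetP => x _; by rewrite inE /= apermE perm1.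
  by rewrite muln1.
suff : (#[sig] %| #|'I_n|)%N by rewrite card_ord.
have e := acts_sum_card_orbit (to := 'P) (G := <[sig]>%g) (S := [set: 'I_n]).
rewrite cardsT in e; rewrite -e; last by apply/actsP => t _ x; rewrite !inE.
apply: dvdn_sum => X /imsetP [i _ ->]; by rewrite hc.
Qed.
End Orbit.

Section UAlg.
Variable (U : unitRingType).
Implicit Types a b c : U.
Lemma invMc a b c : a \is a GRing.unit -> b \is a GRing.unit ->
  (a^-1 * b)^-1 * (a^-1 * c) = b^-1 * c.
Proof.
move=> ua ub; rewrite invrM ?unitrV // invrK -mulrA mulVKr //.
Qed.
Lemma uM a b : a \is a GRing.unit -> b \is a GRing.unit -> a * b \is a GRing.unit.
Proof. by move=> ua ub; rewrite unitrMl. Qed.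
Lemma uV a : a \is a GRing.unit -> a^-1 \is a GRing.unit.
Proof. by rewrite unitrV. Qed.
End UAlg.

Section Coset.
Local Open Scope ring_scope.
Variables (F : fieldType) (A : falgType F) (H N : A -> Prop) (n : nat).
Hypotheses (hH : is_subgroup H) (hN : is_subgroup N) (hNH : forall x, N x -> H x)
  (hnorm : normal_in N H) (hidx : has_index H N n).

Lemma coset_odd_power s : H s -> exists M, [/\ (0 < M)%N, (M %| n)%N & N (s ^+ M)].
Proof.
move=> Hs.
case: hH => Hu H1 HM HV; case: hN => Nu N1 NM NV.
case: hidx => xs [sz xsH cov dis].
pose X i := nth 0 xs i.
have XH i : (i < n)%N -> H (X i) by move=> lt; apply: xsH; rewrite mem_nth // sz.
have Xu i : (i < n)%N -> X i \is a GRing.unit by move=> lt; apply: Hu; apply: XH.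
have su : s \is a GRing.unit by apply: Hu.
have ex_next (i : 'I_n) : exists j : 'I_n, N ((X j)^-1 * (X i * s)).
  have [x xin hx] := cov _ (HM _ _ (XH _ (ltn_ord i)) Hs).
  have lt : (index x xs < n)%N by rewrite -sz index_mem.
  exists (Ordinal lt); by rewrite /X /= nth_index.
pose f (i : 'I_n) := proj1_sig (constructive_indefinite_description _ (ex_next i)).
have fP i : N ((X (f i))^-1 * (X i * s)) by rewrite /f; case: constructive_indefinite_description.
have distinct (i j : 'I_n) : N ((X i)^-1 * X j) -> i = j.
  by move=> h; apply: val_inj; apply: dis => //; rewrite ?ltn_ord.
have finj : injective f.
  move=> i j e; apply: distinct.
  have h1 := fP i; have h2 := fP j; rewrite e in h1.
  have h3 := NM _ _ (NV _ h1) h2.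
  have xu := Xu _ (ltn_ord (f j)); have xi := Xu _ (ltn_ord i); have xj := Xu _ (ltn_ord j).
  rewrite invMc ?unitrM // in h3.
  have := hnorm Hs h3.
  by rewrite invrM // !mulrA mulrK // divrr // mul1r.
  exact: uM.
pose sg := perm finj.
have sgE i : sg i = f i by rewrite permE.
have pow m (i : 'I_n) : N ((X ((sg ^+ m)%g i))^-1 * (X i * s ^+ m)).
  elim: m => [|m ih]; first by rewrite expg0 perm1 expr0 mulr1 mulVr ?Xu.
  rewrite expgSr permM sgE exprSr.
  set j := (sg ^+ m)%g i in ih *.
  have xj := Xu _ (ltn_ord j); have xi := Xu _ (ltn_ord i); have xf := Xu _ (ltn_ord (f j)).
  have h1 := fP j.
  have h2 : N (s^-1 * ((X j)^-1 * (X i * s ^+ m)) * s).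
    by have := hnorm (HV _ Hs) ih; rewrite invrK.
  have := NM _ _ h1 h2.
  by rewrite !mulrA mulrK // mulrK // !mulrA.
have n0 : (0 < n)%N.
  have [x xin _] := cov _ H1; by rewrite -sz; case: (xs) xin.
have Pfree m (i : 'I_n) : (sg ^+ m)%g i = i -> (sg ^+ m = 1)%g.
  move=> e; have hm := pow m i; rewrite e mulKr ?Xu // in hm.
  apply/permP => i'; rewrite perm1.
  apply: distinct; have := NM _ _ (pow m i') (NV _ hm).
  by rewrite -!mulrA divrr ?unitrX // mulr1.
exists #[sg]%g; split; first exact: order_gt0.
  exact: (free_order_dvd Pfree).
have := pow #[sg]%g (Ordinal n0); rewrite expg_order perm1 mulKr //.
exact: Xu.
Qed.
End Coset.

Section Norm.
Variables (R : realType) (F : fieldType) (abs : F -> R) (A : falgType F).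
Hypothesis abs0 : forall x, abs x = 0 <-> x = 0.
Hypothesis absge0 : forall x, 0 <= abs x.
Hypothesis absM : forall x y, abs (x * y) = abs x * abs y.
Hypothesis absD : forall x y, abs (x + y) <= Num.max (abs x) (abs y).

Definition Nm (a : A) : R := \big[Num.max/0]_(i < \dim (fullv : {vspace A}))
     abs (coord (vbasis fullv) i a).

Lemma alg_distE a b : alg_dist abs a b = Nm (a - b). Proof. by []. Qed.

Lemma abs_0 : abs 0 = 0. Proof. by apply/abs0. Qed.
Lemma abs_1 : abs 1 = 1.
Proof.
have h := absM 1 1; rewrite mulr1 in h.
have : abs 1 != 0 by apply/eqP => /abs0 /eqP; rewrite oner_eq0.
move=> nz; apply: (mulfI nz); by rewrite mulr1 -h.
Qed.
Lemma abs_N x : abs (- x) = abs x.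
Proof.
have h : abs (-1) = 1.
  have := absM (-1) (-1); rewrite mulrNN mulr1 abs_1 => /esym/eqP.
  rewrite -expr2 sqrf_eq1 => /orP [/eqP //|/eqP h].
  by have := absge0 (-1); rewrite h ler0N1.
by rewrite -mulN1r absM h mul1r.
Qed.

Lemma abs_sum (I : Type) (r : seq I) (P : pred I) (G : I -> F) :
  abs (\sum_(i <- r | P i) G i) <= \big[Num.max/0]_(i <- r | P i) abs (G i).
Proof.
elim/big_rec2: _ => [|i y z Pi hz]; first by rewrite abs_0.
apply: le_trans (absD _ _) _.
by rewrite ge_max !le_max lexx /= hz orbT.
Qed.

Lemma Nm_ge0 a : 0 <= Nm a.
Proof. exact: bigmax_ge_id. Qed.

Lemma coord_le_Nm a i : abs (coord (vbasis fullv) i a) <= Nm a.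
Proof. exact: le_bigmax. Qed.

Lemma Nm_le a c : 0 <= c -> (forall i, abs (coord (vbasis fullv) i a) <= c) -> Nm a <= c.
Proof. by move=> c0 h; apply: bigmax_le. Qed.

Lemma Nm_lt a c : 0 < c -> (forall i, abs (coord (vbasis fullv) i a) < c) -> Nm a < c.
Proof. by move=> c0 h; apply: bigmax_lt. Qed.

Lemma NmD a b : Nm (a + b) <= Num.max (Nm a) (Nm b).
Proof.
apply: Nm_le; first by rewrite le_max Nm_ge0.
move=> i; rewrite linearD /=; apply: le_trans (absD _ _) _.
by rewrite ge_max !le_max !coord_le_Nm /= orbT.
Qed.

Lemma NmN a : Nm (- a) = Nm a.
Proof. by apply: eq_bigr => i _; rewrite linearN /= abs_N. Qed.

Lemma NmZ c a : Nm (c *: a) = abs c * Nm a.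
Proof.
apply/eqP; rewrite eq_le; apply/andP; split.
  apply: Nm_le; first by rewrite mulr_ge0 ?Nm_ge0.
  by move=> i; rewrite linearZ /= absM ler_wpM2l ?coord_le_Nm.
have [c0|c0] := eqVneq c 0; first by rewrite c0 abs_0 mul0r Nm_ge0.
have ac : 0 < abs c by rewrite lt_def absge0 andbT; apply/eqP => /abs0 /eqP; rewrite (negPf c0).
rewrite -ler_pdivlMl //; apply: Nm_le; first by rewrite mulr_ge0 ?invr_ge0 ?Nm_ge0 ?ltW.
by move=> i; rewrite ler_pdivlMl // -absM -linearZ /= coord_le_Nm.
Qed.

Lemma Nm0 : Nm 0 = 0.
Proof. by apply/eqP; rewrite eq_le Nm_ge0 andbT; apply: Nm_le => // i; rewrite linear0 abs_0. Qed.

Lemma Nm_eq0 a : Nm a = 0 -> a = 0.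
Proof.
move=> h; rewrite (coord_vbasis (memvf a)); apply: big1 => i _.
have : abs (coord (vbasis fullv) i a) <= 0 by rewrite -h coord_le_Nm.
move=> hi; have : abs (coord (vbasis fullv) i a) = 0 by apply/eqP; rewrite eq_le hi absge0.
by move/abs0 ->; rewrite scale0r.
Qed.

Lemma NmB a b : Nm (a - b) = Nm (b - a).
Proof. by rewrite -NmN opprB. Qed.

Lemma Nm_ultra_lt a b c : Nm a < c -> Nm b < c -> Nm (a + b) < c.
Proof. by move=> ha hb; apply: le_lt_trans (NmD _ _) _; rewrite gt_max ha hb. Qed.

Lemma Nm_iso a b : Nm b < Nm a -> Nm (a + b) = Nm a.
Proof.
move=> h; apply/eqP; rewrite eq_le; apply/andP; split.
  by apply: le_trans (NmD _ _) _; rewrite ge_max lexx ltW.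
have := NmD (a + b) (- b); rewrite addrK NmN.
by rewrite le_max => /orP [//|]; rewrite leNgt h.
Qed.

Definition Cst : R := \big[Num.max/0]_(i < \dim (fullv : {vspace A}))
   \big[Num.max/0]_(j < \dim (fullv : {vspace A}))
   Nm ((vbasis fullv)`_i * (vbasis fullv)`_j).

Lemma Cst_ge0 : 0 <= Cst. Proof. exact: bigmax_ge_id. Qed.

Lemma NmM a b : Nm (a * b) <= Cst * (Nm a * Nm b).
Proof.
have ea := coord_vbasis (memvf a); have eb := coord_vbasis (memvf b).
rewrite ea eb mulr_suml.
under eq_bigr do rewrite mulr_sumr.
apply: Nm_le; first by rewrite !mulr_ge0 ?Nm_ge0 ?Cst_ge0.
move=> k; rewrite !linear_sum /=.
apply: le_trans (abs_sum _ _ _) _; apply: bigmax_le; first by rewrite !mulr_ge0 ?Nm_ge0 ?Cst_ge0.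
move=> i _; rewrite linear_sum /=; apply: le_trans (abs_sum _ _ _) _.
apply: bigmax_le; first by rewrite !mulr_ge0 ?Nm_ge0 ?Cst_ge0.
move=> j _; rewrite -scalerAl -scalerAr !linearZ /= !absM.
rewrite -ea -eb.
have h1 := coord_le_Nm a i; have h2 := coord_le_Nm b j.
have h3 : abs (coord (vbasis fullv) k ((vbasis fullv)`_i * (vbasis fullv)`_j)) <= Cst.
  apply: le_trans (coord_le_Nm _ _) _.
  apply: le_trans (le_bigmax _ _ i). exact: (le_bigmax _ _ j).
rewrite [Cst * _]mulrC [Nm a * Nm b]mulrC -mulrA.
have := absge0 (coord (vbasis fullv) i a); have := absge0 (coord (vbasis fullv) j b).
have := absge0 (coord (vbasis fullv) k ((vbasis fullv)`_i * (vbasis fullv)`_j)).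
move: h1 h2 h3; set x := abs _; set y := abs _; set z := abs _.
move=> h1 h2 h3 hz hy hx; rewrite [Nm b * _]mulrCA.
apply: ler_pM => //; first by rewrite mulr_ge0.
exact: ler_pM.
Qed.

Local Notation d := (alg_dist abs (A := A)).
Local Notation uG x := (x \is a GRing.unit).

Variables (p : nat) (iota : A -> A) (H : A -> Prop) (chi : A -> complex R).
Hypotheses (hodd : odd p) (hio : cont_involution abs iota)
  (hH : prop_compact_open abs p H) (hchi : character abs H chi).

Lemma Hsub : is_subgroup H. Proof. by case: hH. Qed.
Lemma Hu x : H x -> uG x. Proof. by case: Hsub => h *; apply: h. Qed.
Lemma H1 : H 1. Proof. by case: Hsub. Qed.
Lemma HM x y : H x -> H y -> H (x * y). Proof. by case: Hsub => _ _ h _; apply: h. Qed.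
Lemma HV x : H x -> H x^-1. Proof. by case: Hsub => _ _ _ h; apply: h. Qed.
Lemma HX x n : H x -> H (x ^+ n).
Proof.
move=> hx; elim: n => [|n ih]; first by rewrite expr0; exact: H1.
by rewrite exprS; apply: HM.
Qed.
Lemma Hopen : open_in_G abs H. Proof. by case: hH. Qed.
Lemma Hcomp : dcompact d H. Proof. by case: hH. Qed.

Lemma chiM x y : H x -> H y -> chi (x * y) = chi x * chi y.
Proof. by case: hchi => _ h _; apply: h. Qed.
Lemma chi_nz x : H x -> chi x != 0. Proof. by case: hchi => h _ _; apply: h. Qed.
Lemma chi1 : chi 1 = 1.
Proof.
have h := chiM H1 H1; rewrite mulr1 in h.
by apply: (mulfI (chi_nz H1)); rewrite -h mulr1.
Qed.
Lemma chiV x : H x -> chi x^-1 = (chi x)^-1.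
Proof.
move=> hx; have := chiM hx (HV hx); rewrite mulrV ?Hu // chi1 => /esym e.
by rewrite -[chi x^-1]mul1r -(mulVf (chi_nz hx)) -mulrA e mulr1.
Qed.
Lemma chiX x n : H x -> chi (x ^+ n) = chi x ^+ n.
Proof.
move=> hx; elim: n => [|n ih]; first by rewrite !expr0 chi1.
by rewrite !exprS (chiM hx (HX n hx)) ih.
Qed.

Lemma bounded : exists2 Bd : R, 0 < Bd & forall x, H x -> Nm x <= Bd.
Proof.
have := Hcomp; move=> /(_ nat (fun (n : nat) x => Nm x < n%:R)) [].
- move=> n x hx; exists (n%:R - Nm x); first by rewrite subr_gt0.
  move=> y; rewrite alg_distE => hy.
  have -> : y = x - (x - y) by rewrite opprB addrC subrK.
  apply: le_lt_trans (NmD _ _) _; rewrite NmN gt_max hx /=.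
  apply: lt_le_trans hy _; by rewrite lerBlDr lerDl Nm_ge0.
- move=> x _; exists (Num.bound (Nm x)); exact: archi_boundP (Nm_ge0 _).
move=> s hs; exists ((\sum_(i <- s) i)%:R + 1); first by rewrite ltr_wpDl.
move=> x hx; have [i [ins hi]] := hs x hx.
have hiS : (i <= \sum_(j <- s) j)%N.
  move: ins; elim: (s) => [|a l ih] //=; rewrite big_cons => -[->|/ih h].
    exact: leq_addr.
  by apply: leq_trans h _; apply: leq_addl.
rewrite -(ler_nat R) in hiS; lra.
Qed.
Lemma ball_mul (rho : R) a b : 0 < rho -> Cst * rho <= 1 ->
  Nm (a - 1) < rho -> Nm (b - 1) < rho -> Nm (a * b - 1) < rho.
Proof.
move=> r0 cr ha hb.
have -> : a * b - 1 = (a - 1) * (b - 1) + ((a - 1) + (b - 1)).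
  set u := a - 1; set v := b - 1.
  rewrite -[a in LHS](subrK 1 a) -[b in LHS](subrK 1 b) -/u -/v.
  by rewrite mulrDl !mulrDr !mul1r mulr1 !addrA addrK.
apply: Nm_ultra_lt; last exact: Nm_ultra_lt.
apply: le_lt_trans (NmM _ _) _.
have u0 := Nm_ge0 (a - 1); have v0 := Nm_ge0 (b - 1); have c0 := Cst_ge0.
apply: (@le_lt_trans _ _ (Cst * rho * Nm (b - 1))).
  rewrite -[leRHS]mulrA; apply: (ler_wpM2l c0); apply: (ler_wpM2r v0); exact: ltW.
apply: (@le_lt_trans _ _ (Nm (b - 1))) => //.
by rewrite -[leRHS]mul1r; apply: ler_wpM2r.
Qed.

Lemma ker_open : exists2 r0 : R, 0 < r0 & forall y, H y -> Nm (y - 1) < r0 -> chi y = 1.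
Proof.
case: hchi => _ _ /(_ 1 H1 (1/2)) [] //; first by lra.
move=> e' e0 he.
pose r0 := Num.min e' (Cst + 1)^-1.
have c0 := Cst_ge0.
have r00 : 0 < r0 by rewrite lt_min e0 invr_gt0; lra.
have cr : Cst * r0 <= 1.
  apply: (@le_trans _ _ (Cst * (Cst + 1)^-1)).
    by apply: ler_wpM2l => //; rewrite ge_min lexx orbT.
  rewrite ler_pdivrMr; lra.
exists r0 => // y hy hy1.
have pw m : Nm (y ^+ m.+1 - 1) < r0.
  elim: m => [|m ih]; first by rewrite expr1.
  by rewrite exprS; apply: ball_mul.
apply: (pow_near1 (c := chi y)) => k.
have := he (y ^+ (2 ^ k)) (HX _ hy).
rewrite alg_distE chi1 chiX // nr_lt; apply.
rewrite NmB; have : (0 < 2 ^ k)%N by rewrite expn_gt0.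
case: (2 ^ k)%N => // m _; apply: lt_le_trans (pw m) _.
by rewrite ge_min lexx.
Qed.

Variables (Bd : R) (hBd0 : 0 < Bd) (hBd : forall x, H x -> Nm x <= Bd).

Lemma NmHl a x : H a -> Nm (a * x) <= Cst * Bd * Nm x.
Proof.
move=> ha; apply: le_trans (NmM _ _) _; rewrite -mulrA; apply: ler_wpM2l; first exact: Cst_ge0.
by apply: ler_wpM2r; [exact: Nm_ge0 | exact: hBd].
Qed.

Lemma NmHr a x : H a -> Nm (x * a) <= Cst * Bd * Nm x.
Proof.
move=> ha; apply: le_trans (NmM _ _) _; rewrite -mulrA; apply: ler_wpM2l; first exact: Cst_ge0.
by rewrite mulrC; apply: ler_wpM2r; [exact: Nm_ge0 | exact: hBd].
Qed.

Lemma small_mul (c t r : R) : 0 <= c -> 0 <= t -> t < r / (c + 1) -> c * t < r.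
Proof.
move=> c0 t0 h; have c1 : 0 < c + 1 by lra.
rewrite ltr_pdivlMr // mulrDr mulr1 mulrC in h; lra.
Qed.

Definition Kc := Cst * Bd * (Cst * Bd).
Lemma Kc_ge0 : 0 <= Kc.
Proof. by rewrite /Kc mulr_ge0 // mulr_ge0 ?Cst_ge0 // ltW. Qed.

Lemma NmHlr a b x : H a -> H b -> Nm (a * x * b) <= Kc * Nm x.
Proof.
move=> ha hb; apply: le_trans (NmHr _ hb) _; rewrite /Kc -[leRHS]mulrA.
have h : 0 <= Cst * Bd by rewrite mulr_ge0 ?Cst_ge0 // ltW.
apply: (ler_wpM2l h); exact: NmHl.
Qed.

Lemma chi_loc x : H x -> exists2 e : R, 0 < e &
  forall y, uG y -> Nm (x - y) < e -> H y /\ chi y = chi x.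
Proof.
move=> hx; have [r0 r00 hr] := ker_open.
have [_ /(_ x hx) [e1 e10 he1]] := Hopen.
have K0 : 0 < Cst * Bd + 1 by rewrite ltr_wpDl // mulr_ge0 ?Cst_ge0 // ltW.
exists (Num.min e1 (r0 / (Cst * Bd + 1))); first by rewrite lt_min e10 divr_gt0.
move=> y uy; rewrite lt_min => /andP [h1 h2].
have hy : H y by apply: he1; rewrite // alg_distE.
split=> //.
have e : y = x * (x^-1 * y) by rewrite mulVKr ?Hu.
have hxy : H (x^-1 * y) by apply: HM; [exact: HV|].
rewrite {1}e (chiM hx hxy) (hr _ hxy) ?mulr1 //.
have -> : x^-1 * y - 1 = x^-1 * (y - x) by rewrite mulrBr mulVr ?Hu.
apply: le_lt_trans (NmHl _ (HV hx)) _.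
apply: small_mul; [by rewrite mulr_ge0 ?Cst_ge0 // ltW|exact: Nm_ge0|by rewrite NmB].
Qed.
Definition Ker y := H y /\ chi y = 1.

Lemma Ker_sub : is_subgroup Ker.
Proof.
split.
- by move=> x [hx _]; apply: Hu.
- by split; [exact: H1|exact: chi1].
- by move=> x y [hx cx] [hy cy]; split; [exact: HM|rewrite chiM // cx cy mulr1].
- by move=> x [hx cx]; split; [exact: HV|rewrite chiV // cx invr1].
Qed.

Lemma Ker_normal : normal_in Ker H.
Proof.
move=> h x hh [hx cx]; have hhx := HM hh hx; split; first by apply: HM => //; exact: HV.
by rewrite (chiM hhx (HV hh)) (chiM hh hx) cx mulr1 chiV // mulfV // chi_nz.
Qed.

Lemma Ker_open : open_in_G abs Ker.
Proof.
split; first by move=> x [hx _]; apply: Hu.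
move=> x [hx cx]; have [e e0 he] := chi_loc hx; exists e => // y uy.
rewrite alg_distE => h; have [hy cy] := he y uy h; split=> //; by rewrite cy.
Qed.

Lemma prod_mulc (k : complex R) (l : seq (complex R)) :
  \prod_(c <- l) (k * c) = k ^+ size l * \prod_(c <- l) c.
Proof.
elim: l => [|a l ih]; first by rewrite !big_nil expr0 mulr1.
by rewrite !big_cons ih /= exprS; ring.
Qed.

Lemma chi_pow_index n h : has_index H Ker n -> H h -> chi h ^+ n = 1.
Proof.
move=> [xs [sz xsH cov dis]] hh.
pose vals := map chi xs.
have Xi i : (i < size xs)%N -> H (nth 0 xs i) by move=> lt; apply: xsH; rewrite mem_nth.
have uv : uniq vals.
  apply/(uniqP 0) => i j; rewrite !inE size_map => lti ltj.
  rewrite !(nth_map 0) // => e; apply: dis; rewrite -?sz //.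
  split; first by apply: HM; [apply: HV; exact: Xi|exact: Xi].
  have hi := Xi _ lti; have hj := Xi _ ltj.
  by rewrite (chiM (HV hi) hj) (chiV hi) e mulVf // chi_nz.
pose mv := map (fun c => chi h * c) vals.
have um : uniq mv by rewrite map_inj_uniq //; apply: mulfI; apply: chi_nz.
have sub : {subset mv <= vals}.
  move=> c /mapP [c' /mapP [x xin ->] ->].
  have hx := xsH _ xin; have [y yin [hy cy]] := cov _ (HM hh hx).
  apply/mapP; exists y => //.
  have hy' : H y by apply: xsH.
  have hhx := HM hh hx; have e1 := chiM (HV hy') hhx.
  rewrite cy (chiV hy') in e1.
  by rewrite -(chiM hh hx) -[chi (h * x)]mul1r -(mulfV (chi_nz hy')) -mulrA -e1 mulr1.
have [sze eqm] := uniq_min_size um sub (eq_leq (esym (size_map _ vals))).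
have pe : perm_eq mv vals by apply: uniq_perm.
have := perm_big _ (P := xpredT) (F := id) (op := *%R) (x := 1) pe.
rewrite big_map prod_mulc size_map sz => e.
have nz : \prod_(c <- vals) c != 0.
  rewrite prodf_seq_neq0; apply/allP => c /mapP [x xin ->] /=; apply: chi_nz; exact: xsH.
by apply: (mulIf nz); rewrite mul1r.
Qed.
Lemma fact1 h : H h -> chi h ^+ 2 = 1 -> chi h = 1.
Proof.
move=> hh h2; case: hH => _ _ _ /(_ Ker Ker_sub (fun x (kx : Ker x) => proj1 kx) Ker_normal Ker_open) [k hk].
have e := chi_pow_index hk hh.
have o : odd (p ^ k) by rewrite oddX hodd orbT.
move: e; rewrite -(odd_double_half (p ^ k)) o -muln2 mulnC exprD expr1 exprM h2 expr1n mulr1.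
done.
Qed.

Lemma NmL a b x : Nm (a * x * b) <= Cst * Nm a * (Cst * Nm b) * Nm x.
Proof.
have c0 := Cst_ge0; have a0 := Nm_ge0 a; have b0 := Nm_ge0 b; have x0 := Nm_ge0 x.
apply: le_trans (NmM _ _) _.
apply: (@le_trans _ _ (Cst * (Cst * (Nm a * Nm x) * Nm b))).
  apply: (ler_wpM2l c0); apply: (ler_wpM2r b0); exact: NmM.
rewrite le_eqVlt; apply/orP; left; apply/eqP; ring.
Qed.
Lemma iU x : uG x -> uG (iota x). Proof. by case: hio => h _ _ _; apply: h. Qed.
Lemma iM x y : uG x -> uG y -> iota (x * y) = iota x * iota y.
Proof. by case: hio => _ h _ _; apply: h. Qed.
Lemma iK x : uG x -> iota (iota x) = x. Proof. by case: hio => _ _ h _; apply: h. Qed.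
Lemma i1 : iota 1 = 1.
Proof.
have u1 : uG (1 : A) by exact: unitr1.
have := iM u1 u1; rewrite mulr1 => e.
have ui := iU u1.
by apply: (mulrI ui); rewrite mulr1 -e.
Qed.
Lemma iV x : uG x -> iota x^-1 = (iota x)^-1.
Proof.
move=> ux; have := iM ux (uV ux); rewrite mulrV // i1 => e.
by rewrite -[iota x^-1]mul1r -(mulVr (iU ux)) -mulrA -e mulr1.
Qed.

Lemma conjM (h x y : A) : uG h -> h * (x * y) * h^-1 = (h * x * h^-1) * (h * y * h^-1).
Proof. by move=> uh; rewrite !mulrA mulrVK. Qed.

Lemma conj_sub (h z y : A) : h * z * h^-1 - 1 = (h * y * h^-1 - 1) + h * (z - y) * h^-1.
Proof. by rewrite [RHS]addrC mulrBr mulrBl addrA subrK. Qed.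

Lemma inv_sub (z y : A) : uG z -> uG y -> z^-1 - y^-1 = z^-1 * (y - z) * y^-1.
Proof. by move=> uz uy; rewrite mulrBr mulrBl mulrK // mulVr // mul1r. Qed.

Lemma odd_small s (r : R) : H s -> 0 < r -> exists M, odd M /\ Nm (s ^+ M - 1) < r.
Proof.
move=> hs r0.
have c0 := Cst_ge0.
pose rho := Num.min r (Cst + 1)^-1.
have rho0 : 0 < rho by rewrite lt_min r0 invr_gt0; lra.
have cr : Cst * rho <= 1.
  apply: (@le_trans _ _ (Cst * (Cst + 1)^-1)).
    by apply: ler_wpM2l => //; rewrite ge_min lexx orbT.
  rewrite ler_pdivrMr; lra.
pose Nn y := H y /\ (forall h, H h -> Nm (h * y * h^-1 - 1) < rho /\ Nm (h * y^-1 * h^-1 - 1) < rho).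
have NnH : forall y, Nn y -> H y by move=> y [].
have sub : is_subgroup Nn.
  split.
  - by move=> x [hx _]; apply: Hu.
  - split; first exact: H1.
    move=> h hh; rewrite invr1 mulr1 divrr ?Hu // subrr Nm0; by split.
  - move=> x y [hx cx] [hy cy]; split; first exact: HM.
    move=> h hh; have [c1 c2] := cx h hh; have [c3 c4] := cy h hh.
    rewrite invrM ?Hu // !conjM ?Hu //; split; exact: ball_mul.
  - move=> x [hx cx]; split; first exact: HV.
    move=> h hh; have [c1 c2] := cx h hh; rewrite invrK; by split.
have nor : normal_in Nn H.
  move=> k x hk [hx cx]; split; first by apply: HM; [exact: HM|exact: HV].
  move=> h hh; have hhk := HM hh hk.
  have uk := Hu hk; have uh := Hu hh; have ux := Hu hx.
  have [c1 c2] := cx _ hhk.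
  rewrite invrM ?uM ?uV // in c1 c2.
  have e : (k * x / k)^-1 = k * x^-1 / k.
    by rewrite invrM ?uM ?uV // invrK invrM // mulrA.
  by rewrite e; rewrite !mulrA in c1 c2 *; split.
have op : open_in_G abs Nn.
  split; first by move=> x [hx _]; apply: Hu.
  move=> y [hy cy]; have [_ /(_ y hy) [e1 e10 he1]] := Hopen.
  have K0 : 0 <= Kc := Kc_ge0.
  exists (Num.min e1 (rho / (Kc + 1))); first by rewrite lt_min e10 divr_gt0 //; lra.
  move=> z uz; rewrite alg_distE lt_min => /andP [h1 h2].
  have hz : H z by apply: he1; rewrite // alg_distE.
  split=> // h hh; have [c1 c2] := cy h hh.
  have uh := Hu hh; have uy := Hu hy.
  split.
    rewrite (conj_sub h z y); apply: Nm_ultra_lt => //.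
    apply: le_lt_trans (NmHlr _ hh (HV hh)) _; apply: small_mul => //; first exact: Nm_ge0.
    by rewrite NmB.
  rewrite (conj_sub h z^-1 y^-1); apply: Nm_ultra_lt => //.
  rewrite inv_sub //.
  have -> : h * (z^-1 * (y - z) * y^-1) * h^-1 = (h * z^-1) * (y - z) * (y^-1 * h^-1) by rewrite !mulrA.
  apply: le_lt_trans (NmHlr _ (HM hh (HV hz)) (HM (HV hy) (HV hh))) _.
  by apply: small_mul => //; exact: Nm_ge0.
case: hH => _ _ _ /(_ Nn sub NnH nor op) [k hk].
have [M [M0 Mdvd [_ hM]]] := coset_odd_power Hsub sub nor hk hs.
exists M; split.
  move: Mdvd => /dvdnP [q e]; have : odd (p ^ k) by rewrite oddX hodd orbT.
  by rewrite e oddM => /andP [].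
have [c1 _] := hM 1 H1; rewrite mul1r invr1 mulr1 in c1.
by apply: lt_le_trans c1 _; rewrite ge_min lexx.
Qed.

Lemma Hclosed u : uG u -> ~ H u -> exists2 e : R, 0 < e & forall v, H v -> ~ (Nm (u - v) < e).
Proof.
move=> uu nu; have [_ /(_ 1 H1) [e1 e10 he1]] := Hopen.
have cb : 0 <= Cst * Bd by rewrite mulr_ge0 ?Cst_ge0 // ltW.
exists (e1 / (Cst * Bd + 1)); first by rewrite divr_gt0 //; lra.
move=> v hv h; apply: nu.
have uv := Hu hv.
have hz : H (v^-1 * u).
  apply: he1; first by apply: uM; [exact: uV|].
  rewrite alg_distE.
  have -> : 1 - v^-1 * u = v^-1 * (v - u) by rewrite mulrBr mulVr.
  apply: le_lt_trans (NmHl _ (HV hv)) _; apply: small_mul => //; first exact: Nm_ge0.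
  by rewrite NmB.
by have := HM hv hz; rewrite mulVKr.
Qed.

Section Tau.
Variable g : A.
Hypothesis ug : uG g.

Definition tau y := g * iota (g^-1 * y * g) * g^-1.

Lemma cu y : uG y -> uG (g^-1 * y * g).
Proof. by move=> uy; apply: uM; [apply: uM; [exact: uV|]|]. Qed.

Lemma tU y : uG y -> uG (tau y).
Proof. by move=> uy; rewrite /tau; apply: uM; [apply: uM; [|apply: iU; exact: cu]|exact: uV]. Qed.

Lemma tM x y : uG x -> uG y -> tau (x * y) = tau x * tau y.
Proof.
move=> ux uy; rewrite /tau.
have -> : g^-1 * (x * y) * g = (g^-1 * x * g) * (g^-1 * y * g).
  by rewrite !mulrA mulrK.
by rewrite (iM (cu ux) (cu uy)) !mulrA mulrVK.
Qed.

Lemma tK y : uG y -> tau (tau y) = y.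
Proof.
move=> uy; rewrite /tau.
have -> : g^-1 * (g * iota (g^-1 * y * g) * g^-1) * g = iota (g^-1 * y * g).
  by rewrite !mulrA mulVr // mul1r mulrVK.
by rewrite iK ?cu // !mulrA mulrK // divrr // mul1r.
Qed.

Lemma t1 : tau 1 = 1.
Proof. by rewrite /tau mulr1 mulVr // i1 mulr1 mulrV. Qed.

Lemma tV y : uG y -> tau y^-1 = (tau y)^-1.
Proof.
move=> uy; have := tM uy (uV uy); rewrite mulrV // t1 => e.
by rewrite -[tau y^-1]mul1r -(mulVr (tU uy)) -mulrA -e mulr1.
Qed.

Lemma tX y n : uG y -> tau (y ^+ n) = tau y ^+ n.
Proof.
move=> uy; elim: n => [|n ih]; first by rewrite !expr0 t1.
by rewrite !exprS tM ?unitrX // ih.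
Qed.

Lemma tcont x : uG x -> forall e : R, 0 < e -> exists2 e' : R, 0 < e' &
  forall y, uG y -> Nm (x - y) < e' -> Nm (tau x - tau y) < e.
Proof.
move=> ux e e0.
pose L := Cst * Nm g * (Cst * Nm g^-1).
have L0 : 0 <= L by rewrite /L !mulr_ge0 ?Cst_ge0 ?Nm_ge0.
case: hio => _ _ _ /(_ _ (cu ux) (e / (L + 1))) [].
  by rewrite divr_gt0 //; lra.
move=> e1 e10 he1.
exists (e1 / (L + 1)); first by rewrite divr_gt0 //; lra.
move=> y uy hxy.
have -> : tau x - tau y = g * (iota (g^-1 * x * g) - iota (g^-1 * y * g)) * g^-1.
  by rewrite /tau mulrBr mulrBl.
apply: le_lt_trans (NmL _ _ _) _; rewrite -/L.
apply: small_mul => //; first exact: Nm_ge0.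
rewrite -alg_distE; apply: he1; first exact: cu.
rewrite alg_distE.
have -> : g^-1 * x * g - g^-1 * y * g = g^-1 * (x - y) * g by rewrite mulrBr mulrBl.
apply: le_lt_trans (NmL _ _ _) _.
have -> : Cst * Nm g^-1 * (Cst * Nm g) = L by rewrite /L mulrC.
by apply: small_mul => //; exact: Nm_ge0.
Qed.
Lemma core : (forall z, H z -> tau z = z -> chi z = 1) ->
  forall h0, H h0 -> H (tau h0) -> chi h0 * chi (tau h0) = 1.
Proof.
move=> hfix h0 hh0 hth0.
pose theta z := chi z * chi (tau z).
pose S z := [/\ H z, H (tau z) & theta z = theta h0].
case: (classic (exists z, S z /\ tau z = z)) => [[z [[hz _ e] ez]]|nex].
  by rewrite -/(theta h0) -e /theta ez hfix // mulr1.
have nfix z : S z -> tau z <> z by move=> sz ez; apply: nex; exists z.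
exfalso.
pose Q x (e : R) := H x ->
  (S x -> forall y, H y -> Nm (x - y) < e -> Nm (tau y - y) = Nm (tau x - x)) /\
  (~ S x -> forall y, H y -> Nm (x - y) < e -> ~ S y).
have ex_rad x : exists e : R, 0 < e /\ Q x e.
  case: (classic (H x)) => hx; last by exists 1; split => // /hx.
  have ux := Hu hx.
  case: (classic (S x)) => sx.
    have d0 : 0 < Nm (tau x - x).
      rewrite lt_def Nm_ge0 andbT; apply/eqP => /Nm_eq0 /eqP; rewrite subr_eq0 => /eqP.
      exact: nfix.
    have [e1 e10 he1] := tcont ux d0.
    exists (Num.min e1 (Nm (tau x - x))); split; first by rewrite lt_min e10.
    move=> _; split=> // _ y hy; rewrite lt_min => /andP [h1 h2].
    have -> : tau y - y = (tau x - x) + ((tau y - tau x) + (x - y)).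
      by rewrite addrCA !addrA !addrNK.
    rewrite Nm_iso //; apply: Nm_ultra_lt => //.
    by rewrite NmB; apply: he1 => //; apply: Hu.
  case: (classic (H (tau x))) => htx.
    have [e4 e40 he4] := chi_loc hx.
    have [e5 e50 he5] := chi_loc htx.
    have [e6 e60 he6] := tcont ux e50.
    exists (Num.min e4 e6); split; first by rewrite lt_min e40.
    move=> _; split=> // _ y hy; rewrite lt_min => /andP [h1 h2] [_ hty e].
    have uy := Hu hy.
    have [_ c1] := he4 y uy h1.
    have [_ c2] := he5 (tau y) (tU uy) (he6 y uy h2).
    by apply: sx; split=> //; rewrite -e /theta c1 c2.
  have [e2 e20 he2] := Hclosed (tU ux) htx.
  have [e3 e30 he3] := tcont ux e20.
  exists e3; split => //; move=> _; split=> // _ y hy h3 [_ hty _].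
  exact: (he2 _ hty (he3 y (Hu hy) h3)).
pose rad x := proj1_sig (constructive_indefinite_description _ (ex_rad x)).
have radP x : 0 < rad x /\ Q x (rad x).
  by rewrite /rad; case: constructive_indefinite_description.
have := Hcomp; move=> /(_ A (fun x y => H x /\ Nm (x - y) < rad x)) [].
- move=> x y [hx hxy]; exists (rad x); first by case: (radP x).
  move=> z; rewrite alg_distE => hyz; split=> //.
  have -> : x - z = (x - y) + (y - z) by rewrite addrA subrK.
  exact: Nm_ultra_lt.
- move=> x hx; exists x; split=> //; rewrite subrr Nm0; by case: (radP x).
move=> L hL.
have [del [del0 hdel]] : exists del : R, 0 < del /\
    forall x, List.In x L -> H x -> S x -> del <= Nm (tau x - x).
  elim: (L) => [|a l [d' [d0 hd]]]; first by exists 1.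
  case: (classic (H a /\ S a)) => [[ha sa]|nas].
    have da : 0 < Nm (tau a - a).
      rewrite lt_def Nm_ge0 andbT; apply/eqP => /Nm_eq0 /eqP; rewrite subr_eq0 => /eqP.
      exact: nfix.
    exists (Num.min d' (Nm (tau a - a))); split; first by rewrite lt_min d0.
    move=> x /= [<-|xl] hx sx; first by rewrite ge_min lexx orbT.
    by rewrite ge_min hd.
  exists d'; split=> // x /= [<-|xl] hx sx; last exact: hd.
  by exfalso; apply: nas.
have lowS y : S y -> del <= Nm (tau y - y).
  move=> sy; have [hy _ _] := sy.
  have [x [xl [hx hxy]]] := hL y hy.
  have [_ /(_ hx) [q1 q2]] := radP x.
  case: (classic (S x)) => sx.
    by rewrite (q1 sx y hy hxy); apply: hdel.
  by exfalso; apply: (q2 sx y hy hxy).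
(* step 4 : construct a nearly fixed point *)
have uh0 := Hu hh0; have uth0 := Hu hth0.
pose s := h0 * (tau h0)^-1.
have hs : H s by apply: HM => //; exact: HV.
have us := Hu hs.
have cb : 0 <= Cst * Bd by rewrite mulr_ge0 ?Cst_ge0 // ltW.
have dpos : 0 < del / (Cst * Bd + 1) by rewrite divr_gt0 //; lra.
have [M [oM hM]] := odd_small hs dpos.
pose q := M./2.
have eM : M = (q + q.+1)%N by rewrite /q -{1}(odd_double_half M) oM addnS add1n -addnn.
pose r := s ^+ q.+1.
have hr : H r := HX _ hs.
have ur := Hu hr.
pose z := r^-1 * h0.
have hz : H z by apply: HM => //; exact: HV.
have ts : tau s = s^-1.
  by rewrite /s tM ?uV // tV // tK // invrM ?uV // invrK.
have tr : tau r = r^-1 by rewrite /r tX // ts exprVn.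
have tz : tau z = r * tau h0 by rewrite /z tM ?uV // tV // tr invrK.
have sz : S z.
  split=> //; first by rewrite tz; apply: HM.
  rewrite /theta tz /z (chiM (HV hr) hh0) (chiM hr hth0) (chiV hr).
  set a := chi r; set b := chi h0; set c := chi (tau h0).
  have an : a != 0 by apply: chi_nz.
  by field.
have th0 : tau h0 = s^-1 * h0 by rewrite /s invrM ?uV // invrK mulrVK.
have dz : tau z - z = (s ^+ M - 1) * z.
  rewrite mulrBl mul1r tz th0 /z /r eM exprD !mulrA exprSr mulrK //.
  have usq : uG (s ^+ q * s) by apply: uM => //; exact: unitrX.
  by rewrite mulrK.
have := lowS z sz; rewrite dz => hle.
have := le_lt_trans hle (le_lt_trans (NmHr _ hz) (small_mul cb (Nm_ge0 _) hM)).
by rewrite ltxx.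
Qed.
End Tau.
Lemma gam_conj (w g h : A) : uG w -> uG g ->
  (w * iota g * g^-1) * h * (w * iota g * g^-1)^-1 =
  w * (iota g * (g^-1 * h * g) * (iota g)^-1) * w^-1.
Proof.
move=> uw ug; have uig := iU ug.
rewrite invrM ?uM ?uV // invrK invrM //.
by rewrite !mulrA.
Qed.

Lemma iota_y (g h : A) : uG g -> uG h ->
  iota (iota g * (g^-1 * h * g) * (iota g)^-1) = tau g h.
Proof.
move=> ug uh; have uig := iU ug; have uc := cu ug uh.
rewrite iM ?uM ?uV // iM // iV // iK //.
Qed.

Lemma main_eq (w g : A) : uG w ->
  (forall y, conjset H w y <-> exists2 x, H x & iota x = y) ->
  (forall x, conjset H w x -> (chi (iota x))^-1 = conjchar chi w x) ->
  uG g ->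
  ((forall x, conjset H g x -> iota x = x -> conjchar chi g x = 1) <->
   intertwines H chi (w * iota g * g^-1)).
Proof.
move=> uw hw1 hw2 ug; split.
- move=> triv h hh; rewrite /conjset /conjchar gam_conj // => hy.
  have uh := Hu hh.
  set y := iota g * (g^-1 * h * g) * (iota g)^-1 in hy *.
  have uy : uG y by rewrite /y; apply: uM; [apply: uM; [exact: iU|exact: cu]|apply: uV; exact: iU].
  have [x0 hx0 ex0] := (hw1 y).1 hy.
  have ety : iota y = tau g h by rewrite iota_y.
  have hth : H (tau g h) by rewrite -ety -ex0 iK ?Hu.
  have := hw2 y hy; rewrite /conjchar ety => <-.
  have := core (g := g) ug _ hh hth.
  have ctn : chi (tau g h) != 0 by apply: chi_nz.
  move=> /(_ _) e; rewrite -[chi h]mulr1 -(mulfV ctn) mulrA e ?mul1r //.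
  move=> z hz tz; have uz := Hu hz.
  have := triv (g^-1 * z * g); rewrite /conjset /conjchar.
  have -> : g * (g^-1 * z * g) * g^-1 = z by rewrite !mulrA mulrK // divrr // mul1r.
  apply=> //.
  move: tz; rewrite /tau => tz.
  have : g^-1 * (g * iota (g^-1 * z * g) * g^-1) * g = g^-1 * z * g by rewrite tz.
  by rewrite !mulrA mulVr // mul1r mulrVK.
- move=> itw x; rewrite /conjset /conjchar => hgx ix.
  set h := g * x * g^-1 in hgx *.
  have uh := Hu hgx.
  have ux : uG x.
    have -> : x = g^-1 * h * g by rewrite /h !mulrA mulVr // mul1r mulrVK.
    by apply: uM => //; apply: uM => //; exact: uV.
  have th : tau g h = h.
    rewrite /tau /h.
    have -> : g^-1 * (g * x * g^-1) * g = x by rewrite !mulrA mulVr // mul1r mulrVK.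
    by rewrite ix.
  set y := iota g * (g^-1 * h * g) * (iota g)^-1.
  have ety : iota y = h by rewrite /y iota_y // th.
  have uy : uG y by rewrite /y; apply: uM; [apply: uM; [exact: iU|exact: cu]|apply: uV; exact: iU].
  have hy : conjset H w y by apply/hw1; exists h => //; rewrite -ety iK.
  have := itw h hgx; rewrite /conjset /conjchar gam_conj // -/y => /(_ hy).
  have e2 := hw2 y hy; rewrite /conjchar in e2; rewrite -e2 ety => e.
  apply: fact1 => //.
  have ctn : chi h != 0 by apply: chi_nz.
  by rewrite expr2 {1}e mulVf.
Qed.
End Norm.

Theorem lemma6p2 (R : realType) (F : fieldType) (abs : F -> R) (p : nat)
  (A : falgType F) (iota : A -> A) (H : A -> Prop) (chi : A -> complex R)
  (w : A) :
  prime p -> odd p -> nonarch_local_field abs p -> central_simple A ->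
  cont_involution abs iota ->
  prop_compact_open abs p H ->
  character abs H chi ->
  w \is a GRing.unit ->
  (forall y, conjset H w y <-> exists2 x, H x & iota x = y) ->
  (forall x, conjset H w x -> (chi (iota x))^-1 = conjchar chi w x) ->
  forall g : A, g \is a GRing.unit ->
    ((forall x, conjset H g x -> iota x = x -> conjchar chi g x = 1) <->
     intertwines H chi (w * iota g * g^-1)).
Proof.
move=> hp hodd hF hcs hio hH hchi uw hw1 hw2 g ug.
case: hF => [[a0 ag] [aM aD] _ _ _].
have [Bd Bd0 hBd] : exists2 Bd : R, 0 < Bd & forall x, H x -> Nm abs x <= Bd.
  by eapply bounded; eassumption.
by eapply main_eq; eassumption.
Qed.
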